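(* Let $A\in \mathrm{Mat}_{m\times n}(\mathbb{C})$ have rank $r\ge 1$, let $A^+$ be its Moore–Penrose pseudoinverse (if $A=U\Sigma V^*$ is a thin singular value decomposition with $\Sigma=\mathrm{diag}(\sigma_1,\dots,\sigma_r)$, then $A^+=V\Sigma^{-1}U^*$), let $\mathbb{U}\subseteq\mathbb{C}^m$ be the column space of $A$ and $\mathbb{V}\subseteq\mathbb{C}^n$ the column space of $A^T$. Then the decomposition locus of $A$ is \[ \mathcal{D}_A=\{(\mathbf{u},\mathbf{v})\in \mathbb{U}\times\mathbb{V} \;:\; \mathbf{v}^T A^+\mathbf{u}\neq 0\}. \]
   Context: A matrix $A\in\mathbb{C}^m\otimes\mathbb{C}^n$ is identified with a tensor, and $\mathbf{u}\otimes\mathbf{v}$ with the rank-one matrix $\mathbf{u}\mathbf{v}^T$. The rank $\mathrm{rk}(T)$ of a tensor $T\in\mathbb{C}^{n_1}\otimes\cdots\otimes\mathbb{C}^{n_k}$ is the minimal $r$ such that $T$ is a sum of $r$ tensors of the form $\mathbf{v}^1\otimes\cdots\otimes\mathbf{v}^k$. The decomposition locus of $T$ is $\mathcal{D}_T=\{(\mathbf{v}^1,\dots,\mathbf{v}^k)\in\mathbb{C}^{n_1}\times\cdots\times\mathbb{C}^{n_k} : \mathrm{rk}(T-\lambda\,\mathbf{v}^1\otimes\cdots\otimes\mathbf{v}^k)=\mathrm{rk}(T)-1 \text{ for some }\lambda\in\mathbb{C}\}$; the forbidden locus $\mathcal{F}_T$ is its complement. *)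

(* Defs.v *)
From HB Require Import structures.
From mathcomp Require Import all_boot all_order all_algebra.
Set Implicit Arguments. Unset Strict Implicit. Unset Printing Implicit Defensive.
Import Order.TTheory GRing.Theory Num.Theory.
Local Open Scope ring_scope.

(* Scalars: an arbitrary numeric algebraically closed field C (e.g. the
   complex numbers), with complex conjugation Num.conj. *)

Definition conjT (C : numClosedFieldType) m n (A : 'M[C]_(m, n)) : 'M[C]_(n, m) :=
  map_mx Num.conj A^T.

Definition in_colspace (C : numClosedFieldType) m n (u : 'cV[C]_m) (A : 'M[C]_(m, n)) : bool :=
  (u^T <= A^T)%MS.

Definition is_thin_svd (C : numClosedFieldType) m n r (A : 'M[C]_(m, n))
  (U : 'M[C]_(m, r)) (s : 'rV[C]_r) (V : 'M[C]_(n, r)) : Prop :=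
  [/\ conjT U *m U = 1%:M, conjT V *m V = 1%:M,
      (forall i, 0 < s 0 i) & A = U *m diag_mx s *m conjT V].

Definition svd_pinv (C : numClosedFieldType) m n r
  (U : 'M[C]_(m, r)) (s : 'rV[C]_r) (V : 'M[C]_(n, r)) : 'M[C]_(n, m) :=
  V *m diag_mx (map_mx GRing.inv s) *m conjT U.

(* Decomposition locus of a matrix A (u (x) v identified with u v^T):
   (u,v) such that rk(A - lambda u v^T) = rk(A) - 1 for some lambda. *)
Definition decomp_locus (C : numClosedFieldType) m n (A : 'M[C]_(m, n))
  (u : 'cV[C]_m) (v : 'cV[C]_n) : Prop :=
  exists lambda : C, \rank (A - lambda *: (u *m v^T)) = (\rank A - 1)%N.

(* Main.v *)
Require Import Defs.
From HB Require Import structures.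
From mathcomp Require Import all_boot all_order all_algebra zify.
Import Order.TTheory GRing.Theory Num.Theory.
Local Open Scope ring_scope.
Lemma col_strict (F : fieldType) k n (A M : 'M[F]_(k,n)) (w : 'rV_n) (a : 'cV_k) :
  ~~ (w <= A)%MS -> M = A - a *m w -> (\rank A <= \rank M)%N.
Proof.
move=> nwA ->.
have h1 : (\rank A < \rank (A + w)%MS)%N.
  rewrite ltn_neqAle.
  have := mxrank_leqif_sup (addsmxSl A w) => -[-> ->].
  rewrite andbT; apply: contra nwA => H; exact: submx_trans (addsmxSr A w) H.
have h2 : \rank (A + w)%MS = \rank ((A - a *m w) + w)%MS.
  apply/eqmx_rank/andP; split; rewrite addsmx_sub ?addsmxSr ?andbT.
  - rewrite -[X in (X <= _)%MS](subrK (a *m w) A).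
    by apply: addmx_sub_adds; [exact: submx_refl | exact: submxMl].
  - by apply: addmx_sub_adds; [exact: submx_refl | rewrite eqmx_opp submxMl].
have h3 := mxrank_adds_leqif (A - a *m w) w.
have h4 : (\rank w <= 1)%N by apply: rank_leq_row.
move: h3 => [h3 _].
have := leq_trans h1 (eq_leq h2); move=> h5.
have h6 := leq_trans h5 h3.
move: h6 h4; lia.
Qed.
Lemma core_nec (F : fieldType) m n (A : 'M[F]_(m,n)) (u : 'cV_m) (E : 'rV_m) (lam : F) :
  E *m u = 0 -> (\rank A <= \rank (A - lam *: (u *m (E *m A)))%R)%N.
Proof.
move=> Eu.
have eA : A = (1%:M + lam *: (u *m E)) *m (A - lam *: (u *m (E *m A))) :> 'M_(m,n).
  rewrite mulmxDl mul1mx mulmxBr.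
  have -> : (lam *: (u *m E)) *m (lam *: (u *m (E *m A))) = 0.
    by rewrite -scalemxAl -scalemxAr -mulmxA (mulmxA E u) Eu mul0mx mulmx0 !scaler0.
  by rewrite subr0 -scalemxAl mulmxA subrK.
rewrite {1}eA; exact: mxrankM_maxr.
Qed.

Lemma rank_lb (F : fieldType) m n (A : 'M[F]_(m,n)) (u : 'cV_m) (w : 'rV_n) (lam : F) :
  (\rank A <= \rank (A - lam *: (u *m w))%R + 1)%N.
Proof.
have h := mxrank_add (A - lam *: (u *m w)) (lam *: (u *m w)).
rewrite subrK in h; apply: (leq_trans h); rewrite leq_add2l.
rewrite scalemxAl; apply: leq_trans (mxrankM_maxr _ _) _; exact: rank_leq_row.
Qed.

Lemma core_suf (F : fieldType) m n (A : 'M[F]_(m,n)) (y : 'cV_n) (E : 'rV_m) :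
  E *m (A *m y) != 0 ->
  exists lam, \rank (A - lam *: ((A *m y) *m (E *m A))) = (\rank A - 1)%N.
Proof.
set u := A *m y => cn0.
set c := (E *m u) 0 0.
have cE : E *m u = c%:M by rewrite {1}[E *m u]mx11_scalar.
have c0 : c != 0.
  apply/eqP => c0; move: cn0; by rewrite cE c0 -scalemx1 scale0r eqxx.
exists c^-1.
set M := A - _.
have My : M *m y = 0.
  have cE' : E *m (A *m y) = c%:M by exact: cE.
  rewrite /M mulmxBl -scalemxAl -(mulmxA u (E *m A) y) -(mulmxA E A y) cE' mul_mx_scalar.
  by rewrite -/u scalerA mulVf // scale1r subrr.
have u0 : u != 0.
  apply/eqP => u0; move: cn0; by rewrite u0 mulmx0 eqxx.
have MA : (M <= A)%MS.
  have -> : M = (1%:M - c^-1 *: (u *m E)) *m A.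
    by rewrite /M mulmxBl mul1mx -scalemxAl mulmxA.
  exact: submxMl.
have lt : (\rank M < \rank A)%N.
  have [le eq] := mxrank_leqif_sup MA.
  rewrite ltn_neqAle le andbT eq; apply/negP => /submxP [K hK].
  by move: u0; rewrite /u hK -mulmxA My mulmx0 eqxx.
have := @rank_lb _ _ _ A u (E *m A) c^-1; rewrite -/M => lb.
lia.
Qed.

Lemma diag_inv (C : numClosedFieldType) r (s : 'rV[C]_r) :
  (forall i, 0 < s 0 i) -> diag_mx s *m diag_mx (map_mx GRing.inv s) = 1%:M.
Proof.
move=> hs; apply/matrixP => i j; rewrite mul_diag_mx !mxE.
case: (eqVneq i j) => [->|nij]; last by rewrite mulr0n mulr0.
by rewrite !mulr1n mulfV // gt_eqF ?hs // lt0r_neq0 ?hs.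
Qed.

Lemma pinv_id (C : numClosedFieldType) m n r (A : 'M[C]_(m, n))
  (U : 'M[C]_(m, r)) (s : 'rV[C]_r) (V : 'M[C]_(n, r)) :
  is_thin_svd A U s V -> A *m svd_pinv U s V *m A = A.
Proof.
case=> hU hV hs hA; rewrite /svd_pinv hA.
rewrite !mulmxA -(mulmxA _ (conjT V) V) hV mulmx1 -(mulmxA U (diag_mx s)) diag_inv //.
by rewrite mulmx1 -(mulmxA _ (conjT U) U) hU mulmx1.
Qed.

Theorem proposition3p1 (C : numClosedFieldType) (m n : nat) (A : 'M[C]_(m, n))
  (U : 'M[C]_(m, \rank A)) (s : 'rV[C]_(\rank A)) (V : 'M[C]_(n, \rank A)) :
  (1 <= \rank A)%N ->
  is_thin_svd A U s V ->
  forall (u : 'cV[C]_m) (v : 'cV[C]_n),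
    decomp_locus A u v <->
    [/\ in_colspace u A, in_colspace v A^T & v^T *m svd_pinv U s V *m u != 0].
Proof.
move=> r1 hsvd u v.
have hP := @pinv_id _ _ _ _ _ _ _ _ hsvd.
set P := svd_pinv U s V in hP *.
have key : forall y E, u = A *m y -> v^T = E *m A -> v^T *m P *m u = E *m u.
  move=> y E hu hv; by rewrite hv hu mulmxA -(mulmxA (E *m A) P A) -(mulmxA E A (P *m A)) (mulmxA A P A) hP mulmxA.
split.
- case=> lam hr.
  have cu : in_colspace u A.
    rewrite /in_colspace; apply/negPn/negP => nu.
    have := @col_strict _ _ _ A^T (A - lam *: (u *m v^T))^T u^T (lam *: v) nu.
    rewrite !mxrank_tr hr => h.
    have : (\rank A <= \rank A - 1)%N.
      apply: h; by rewrite linearB /= linearZ /= trmx_mul trmxK scalemxAl.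
    lia.
  have cv : in_colspace v A^T.
    rewrite /in_colspace trmxK; apply/negPn/negP => nv.
    have := @col_strict _ _ _ A (A - lam *: (u *m v^T)) v^T (lam *: u) nv.
    rewrite hr => h.
    have : (\rank A <= \rank A - 1)%N by apply: h; rewrite scalemxAl.
    lia.
  split => //.
  move: cu cv; rewrite /in_colspace trmxK => /submxP [D hD] /submxP [E hE].
  have hu : u = A *m D^T by rewrite -[u]trmxK hD trmx_mul trmxK.
  rewrite (key _ _ hu hE); apply/negP => /eqP Eu.
  have := @core_nec _ _ _ A u E lam Eu; rewrite -hE hr; lia.
- case; rewrite /in_colspace trmxK => /submxP [D hD] /submxP [E hE] hc.
  have hu : u = A *m D^T by rewrite -[u]trmxK hD trmx_mul trmxK.
  rewrite (key _ _ hu hE) hu in hc.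
  have [lam hl] := @core_suf _ _ _ A _ _ hc.
  by exists lam; rewrite hE hu.
Qed.
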